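(* Let $(X,d)$ be a complete separable metric space without isolated points and let $f\colon X\to X$ be a continuous map. Then the following are equivalent: (1) for each $k\geq 2$, $D_k(f)$ is dense in $X^k$; (2) there exist a sequence $\{q_n\}$ in $\mathbb{N}$ and a dense $\sigma$-Cantor subset $S$ of $X$ such that for any $x,y\in S$ with $x\neq y$, $\lim_{n\to\infty} d(f^{q_n}(x),f^{q_n}(y))=\infty$.
   Context: For $k\geq 2$, $D_k(f)=\{(x_1,\dots,x_k)\in X^k: \limsup_{n\to\infty}\min_{1\leq i<j\leq k} d(f^n(x_i),f^n(x_j))=\infty\}$. A $\sigma$-Cantor set is a countable union of sets each homeomorphic to the Cantor ternary set. *)

(* Defs.v *)
From Stdlib Require Import Reals.
Open Scope R_scope.

Definition is_metric {X : Type} (d : X -> X -> R) : Prop :=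
  (forall x y, 0 <= d x y) /\
  (forall x y, d x y = 0 <-> x = y) /\
  (forall x y, d x y = d y x) /\
  (forall x y z, d x z <= d x y + d y z).

Definition cauchy_seq {X : Type} (d : X -> X -> R) (u : nat -> X) : Prop :=
  forall eps, 0 < eps -> exists N, forall m n, (N <= m)%nat -> (N <= n)%nat -> d (u m) (u n) < eps.

Definition converges_to {X : Type} (d : X -> X -> R) (u : nat -> X) (l : X) : Prop :=
  forall eps, 0 < eps -> exists N, forall n, (N <= n)%nat -> d (u n) l < eps.

Definition complete_metric {X : Type} (d : X -> X -> R) : Prop :=
  forall u : nat -> X, cauchy_seq d u -> exists l, converges_to d u l.

Definition countable_type (I : Type) : Prop :=
  exists g : I -> nat, forall i j, g i = g j -> i = j.

Definition countable_set {X : Type} (D : X -> Prop) : Prop :=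
  exists g : X -> nat, forall x y, D x -> D y -> g x = g y -> x = y.

Definition dense_set {X : Type} (d : X -> X -> R) (D : X -> Prop) : Prop :=
  forall x eps, 0 < eps -> exists y, D y /\ d x y < eps.

Definition separable {X : Type} (d : X -> X -> R) : Prop :=
  exists D : X -> Prop, countable_set D /\ dense_set d D.

Definition no_isolated_points {X : Type} (d : X -> X -> R) : Prop :=
  forall x eps, 0 < eps -> exists y, y <> x /\ d x y < eps.

Definition continuous_map {X : Type} (d : X -> X -> R) (f : X -> X) : Prop :=
  forall x eps, 0 < eps -> exists delta, 0 < delta /\
    forall y, d x y < delta -> d (f x) (f y) < eps.

(* A point of X^k is represented by x : nat -> X, only the coordinates
   0 <= i < k being relevant. *)
Definition D_k {X : Type} (d : X -> X -> R) (f : X -> X) (k : nat) (x : nat -> X) : Prop :=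
  (* limsup_{n} min_{0<=i<j<k} d(f^n x_i, f^n x_j) = +oo *)
  forall M N, exists n, (N <= n)%nat /\
    forall i j, (i < j)%nat -> (j < k)%nat ->
      M < d (Nat.iter n f (x i)) (Nat.iter n f (x j)).

Definition dense_in_power {X : Type} (d : X -> X -> R) (k : nat) (A : (nat -> X) -> Prop) : Prop :=
  forall (y : nat -> X) eps, 0 < eps ->
    exists x, A x /\ forall i, (i < k)%nat -> d (x i) (y i) < eps.

Fixpoint cantor_stage (n : nat) (t : R) : Prop :=
  match n with
  | O => 0 <= t <= 1
  | S m => cantor_stage m (3 * t) \/ cantor_stage m (3 * t - 2)
  end.
(* cantor_stage (S m) = C_m/3 ∪ (2/3 + C_m/3) *)

Definition cantor_ternary (t : R) : Prop := forall n, cantor_stage n t.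

Definition homeomorphic_to_cantor {X : Type} (d : X -> X -> R) (A : X -> Prop) : Prop :=
  exists h : R -> X,
    (forall t, cantor_ternary t -> A (h t)) /\
    (forall a, A a -> exists t, cantor_ternary t /\ h t = a) /\
    (forall s t, cantor_ternary s -> cantor_ternary t -> h s = h t -> s = t) /\
    (forall s eps, cantor_ternary s -> 0 < eps -> exists delta, 0 < delta /\
       forall t, cantor_ternary t -> Rabs (s - t) < delta -> d (h s) (h t) < eps) /\
    (* h^{-1} continuous on A *)
    (forall s eps, cantor_ternary s -> 0 < eps -> exists delta, 0 < delta /\
       forall t, cantor_ternary t -> d (h s) (h t) < delta -> Rabs (s - t) < eps).

Definition sigma_cantor {X : Type} (d : X -> X -> R) (S : X -> Prop) : Prop :=
  exists (I : Type) (A : I -> X -> Prop),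
    countable_type I /\
    (forall i, homeomorphic_to_cantor d (A i)) /\
    (forall x, S x <-> exists i, A i x).

(* Main.v *)
Require Import Defs.
From Stdlib Require Import Reals Lra Lia ClassicalEpsilon Classical.
Open Scope R_scope.


Lemma m_pos {X} (d : X -> X -> R) : is_metric d -> forall x y, 0 <= d x y.
Proof. intros [H _]; exact H. Qed.
Lemma m_eq {X} (d : X -> X -> R) : is_metric d -> forall x y, d x y = 0 <-> x = y.
Proof. intros [_ [H _]]; exact H. Qed.
Lemma m_sym {X} (d : X -> X -> R) : is_metric d -> forall x y, d x y = d y x.
Proof. intros [_ [_ [H _]]]; exact H. Qed.
Lemma m_tri {X} (d : X -> X -> R) : is_metric d -> forall x y z, d x z <= d x y + d y z.
Proof. intros [_ [_ [_ H]]]; exact H. Qed.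
Lemma m_refl {X} (d : X -> X -> R) : is_metric d -> forall x, d x x = 0.
Proof. intros Hm x; apply (m_eq d Hm); reflexivity. Qed.
Lemma m_neq_pos {X} (d : X -> X -> R) : is_metric d -> forall x y, x <> y -> 0 < d x y.
Proof.
  intros Hm x y Hxy. destruct (m_pos d Hm x y) as [H|H]; auto.
  exfalso; apply Hxy; apply (m_eq d Hm); auto.
Qed.

Lemma fin_min (K : nat) (P : nat -> R -> Prop) :
  (forall i, (i < K)%nat -> exists e, 0 < e /\ P i e) ->
  exists e, 0 < e /\ forall i, (i < K)%nat -> exists e', e <= e' /\ P i e'.
Proof.
  induction K; intros H.
  - exists 1; split; [lra| intros; lia].
  - destruct IHK as [e [He1 He2]]. { intros i Hi; apply H; lia. }
    destruct (H K ltac:(lia)) as [e0 [He0 P0]].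
    exists (Rmin e e0); split. { apply Rmin_pos; auto. }
    intros i Hi. destruct (Nat.eq_dec i K) as [->|Hne].
    + exists e0; split; [apply Rmin_r| auto].
    + destruct (He2 i ltac:(lia)) as [e' [? ?]]. exists e'; split; [|auto].
      eapply Rle_trans; [apply Rmin_l| auto].
Qed.

Lemma fin_nat (K : nat) (P : nat -> nat -> Prop) :
  (forall i N N', (N <= N')%nat -> P i N -> P i N') ->
  (forall i, (i < K)%nat -> exists N, P i N) ->
  exists N, forall i, (i < K)%nat -> P i N.
Proof.
  intros Hmono; induction K; intros H.
  - exists 0%nat; intros; lia.
  - destruct IHK as [N HN]. { intros; apply H; lia. }
    destruct (H K ltac:(lia)) as [N0 HN0].
    exists (Nat.max N N0). intros i Hi. destruct (Nat.eq_dec i K) as [->|].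
    + apply (Hmono K N0); [lia|auto].
    + apply (Hmono i N); [lia| apply HN; lia].
Qed.

Lemma fin_bound (K : nat) (F : nat -> R) : exists B, forall i, (i < K)%nat -> F i <= B.
Proof.
  induction K.
  - exists 0; intros; lia.
  - destruct IHK as [B HB]. exists (Rmax B (F K)). intros i Hi.
    destruct (Nat.eq_dec i K) as [->|]. + apply Rmax_r.
    + eapply Rle_trans; [apply HB; lia| apply Rmax_l].
Qed.

Lemma iter_cont {X} (d : X -> X -> R) (f : X -> X) :
  continuous_map d f -> forall n, continuous_map d (Nat.iter n f).
Proof.
  intros Hf n; induction n; intros x eps Heps.
  - exists eps; split; auto.
  - simpl. destruct (Hf (Nat.iter n f x) eps Heps) as [d1 [Hd1 H1]].
    destruct (IHn x d1 Hd1) as [d2 [Hd2 H2]]. exists d2; split; auto.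
Qed.

Lemma pick_avoid {X} (d : X -> X -> R) (S : X -> Prop) (Hm : is_metric d)
  (Hni : no_isolated_points d) (HS : dense_set d S)
  (y : X) eps (Heps : 0 < eps) (i : nat) (x : nat -> X) :
  exists z, S z /\ d y z < eps /\ forall j, (j < i)%nat -> z <> x j.
Proof.
  destruct (fin_min i (fun j e => x j <> y -> e <= d y (x j))) as [r [Hr Hr2]].
  { intros j _. destruct (classic (x j = y)) as [E|E].
    - exists 1; split; [lra| tauto].
    - exists (d y (x j)); split; [apply (m_neq_pos d Hm); auto | intros; lra]. }
  destruct (Hni y (Rmin eps r) (Rmin_pos _ _ Heps Hr)) as [w [Hwy Hdw]].
  assert (Hwx : forall j, (j < i)%nat -> w <> x j).
  { intros j Hj E. subst w. destruct (classic (x j = y)) as [E2|E2].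
    - congruence.
    - destruct (Hr2 j Hj) as [e' [He' H']]. specialize (H' E2).
      pose proof (Rmin_r eps r). lra. }
  destruct (fin_min i (fun j e => e <= d w (x j))) as [r2 [Hr2' Hr22]].
  { intros j Hj. exists (d w (x j)); split; [apply (m_neq_pos d Hm); auto| lra]. }
  assert (Hpos : 0 < eps - d y w). { pose proof (Rmin_l eps r). lra. }
  destruct (HS w (Rmin (eps - d y w) r2) (Rmin_pos _ _ Hpos Hr2')) as [z [Sz Hz]].
  exists z; repeat split; auto.
  - pose proof (m_tri d Hm y w z). pose proof (Rmin_l (eps - d y w) r2). lra.
  - intros j Hj E; subst z. destruct (Hr22 j Hj) as [e' [? ?]].
    pose proof (Rmin_r (eps - d y w) r2). lra.
Qed.

Lemma pick_many {X} (d : X -> X -> R) (S : X -> Prop) (Hm : is_metric d)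
  (Hni : no_isolated_points d) (HS : dense_set d S)
  (y : nat -> X) eps (Heps : 0 < eps) : forall k, exists x : nat -> X,
  (forall i, (i < k)%nat -> S (x i) /\ d (y i) (x i) < eps) /\
  (forall i j, (i < k)%nat -> (j < k)%nat -> i <> j -> x i <> x j).
Proof.
  induction k.
  - exists y; split; intros; lia.
  - destruct IHk as [x [H1 H2]].
    destruct (pick_avoid d S Hm Hni HS (y k) eps Heps k x) as [z [Sz [Hz Hzx]]].
    exists (fun i => if Nat.eq_dec i k then z else x i). split.
    + intros i Hi. destruct (Nat.eq_dec i k) as [->|]; auto. apply H1; lia.
    + intros i j Hi Hj Hij.
      destruct (Nat.eq_dec i k) as [->|]; destruct (Nat.eq_dec j k) as [->|].
      * congruence.
      * apply Hzx; lia.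
      * intro E; apply (Hzx i); [lia| auto].
      * apply H2; lia.
Qed.

Lemma dir21 (X : Type) (d : X -> X -> R) (f : X -> X) :
  is_metric d -> no_isolated_points d ->
   (exists (q : nat -> nat) (S : X -> Prop),
      sigma_cantor d S /\ dense_set d S /\
      forall x y, S x -> S y -> x <> y ->
        forall M, exists N, forall n, (N <= n)%nat ->
          M < d (Nat.iter (q n) f x) (Nat.iter (q n) f y)) ->
   (forall k : nat, (2 <= k)%nat -> dense_in_power d k (D_k d f k)).
Proof.
  intros Hm Hni [q [S [_ [HSd Hsep]]]] k Hk y eps Heps.
  destruct (pick_many d S Hm Hni HSd y eps Heps k) as [x [Hx1 Hx2]].
  exists x; split.
  - intros M N.
    destruct (fin_bound N (fun v => d (Nat.iter v f (x 0%nat)) (Nat.iter v f (x 1%nat)))) as [B HB].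
    assert (HN1 : exists N1, forall i, (i<k)%nat -> forall j, (j<k)%nat -> (i < j)%nat ->
       forall n, (N1 <= n)%nat -> Rmax M B < d (Nat.iter (q n) f (x i)) (Nat.iter (q n) f (x j))).
    { apply fin_nat.
      - intros i N0 N' HN HP j Hj Hij n Hn. apply HP; auto; lia.
      - intros i Hi. apply fin_nat.
        + intros j N0 N' HN HP Hij n Hn. apply HP; auto; lia.
        + intros j Hj. destruct (Nat.lt_ge_cases i j) as [Hij|Hij].
          * destruct (Hsep (x i) (x j) (proj1 (Hx1 i Hi)) (proj1 (Hx1 j Hj))
                        (Hx2 i j Hi Hj ltac:(lia)) (Rmax M B)) as [N0 HN0].
            exists N0. intros _ n Hn; apply HN0; lia.
          * exists 0%nat; intros; lia. }
    destruct HN1 as [N1 HN1].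
    exists (q N1). split.
    + destruct (Nat.le_gt_cases N (q N1)) as [l|l]; auto. exfalso.
      pose proof (HN1 0%nat ltac:(lia) 1%nat ltac:(lia) ltac:(lia) N1 (le_n _)) as H.
      pose proof (HB (q N1) l). pose proof (Rmax_r M B). simpl in *. lra.
    + intros i j Hij Hjk. pose proof (HN1 i ltac:(lia) j Hjk Hij N1 (le_n _)).
      pose proof (Rmax_l M B). lra.
  - intros i Hi. rewrite (m_sym d Hm). apply Hx1; auto.
Qed.

Record State (X : Type) := mkState { cs : nat -> X; rho : R; qq : nat }.
Arguments mkState {X}. Arguments cs {X}. Arguments rho {X}. Arguments qq {X}.

Definition stepQ {X} (d : X -> X -> R) (f : X -> X) (tgt : X) (n : nat) (st st' : State X) : Prop :=
  0 < rho st' /\ rho st' <= rho st / 2 /\ rho st' <= / (INR n + 1) /\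
  (forall i, (i < 2 ^ S n - 2)%nat -> d (cs st' i) (cs st (Nat.div2 i)) + rho st' <= rho st) /\
  d (cs st' (2 ^ S n - 2)%nat) tgt < / (INR n + 1) /\
  (forall i j, (i < 2 ^ S n - 1)%nat -> (j < 2 ^ S n - 1)%nat -> i <> j ->
     3 * rho st' < d (cs st' i) (cs st' j) /\
     forall x y, d (cs st' i) x <= rho st' -> d (cs st' j) y <= rho st' ->
        INR n + 1 < d (Nat.iter (qq st') f x) (Nat.iter (qq st') f y)).

Lemma step_exists {X} (d : X -> X -> R) (f : X -> X) (Hm : is_metric d) (Hf : continuous_map d f)
  (Hdense : forall k, (2 <= k)%nat -> dense_in_power d k (D_k d f k))
  (tgt : X) n (st : State X) : 0 < rho st -> exists st', stepQ d f tgt n st st'.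
Proof.
  intros Hr.
  set (K := (2 ^ S n)%nat).
  assert (HK : (2 <= K)%nat).
  { unfold K. rewrite Nat.pow_succ_r'. pose proof (Nat.pow_nonzero 2 n). lia. }
  set (y := fun i => if (i <? K - 2)%nat then cs st (Nat.div2 i) else tgt).
  assert (Hn1 : 0 < INR n + 1). { pose proof (pos_INR n). lra. }
  set (eps := Rmin (rho st / 2) (/ (INR n + 1))).
  assert (Heps : 0 < eps). { apply Rmin_pos; [lra| apply Rinv_0_lt_compat; lra]. }
  destruct (Hdense K HK y eps Heps) as [x [HD Hxy]].
  destruct (HD (INR n + 2) 0%nat) as [m [_ Hm']].
  assert (Hcont := iter_cont d f Hf m).
  destruct (fin_min K (fun i e => forall z, d (x i) z < e -> d (Nat.iter m f (x i)) (Nat.iter m f z) < /2))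
    as [dl [Hdl Hdl2]].
  { intros i _. destruct (Hcont (x i) (/2) ltac:(lra)) as [e [He He2]]. exists e; auto. }
  assert (Hdist: forall i j, (i<K)%nat -> (j<K)%nat -> i <> j ->
            INR n + 2 < d (Nat.iter m f (x i)) (Nat.iter m f (x j))).
  { intros i j Hi Hj Hij. destruct (Nat.lt_total i j) as [H|[H|H]].
    - apply Hm'; auto.
    - contradiction.
    - rewrite (m_sym d Hm). apply Hm'; auto. }
  destruct (fin_min K (fun i e => forall j, (j<K)%nat -> j <> i -> e <= d (x i) (x j))) as [g [Hg Hg2]].
  { intros i Hi. destruct (fin_min K (fun j e => j <> i -> e <= d (x i) (x j))) as [g0 [Hg0 Hg02]].
    { intros j Hj. destruct (Nat.eq_dec j i).
      - exists 1; split; [lra|tauto].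
      - exists (d (x i) (x j)); split; [ | intros; lra].
        apply (m_neq_pos d Hm). intro E. specialize (Hdist i j Hi Hj ltac:(auto)).
        rewrite E, (m_refl d Hm) in Hdist. pose proof (pos_INR n). lra. }
    exists g0; split; auto. intros j Hj Hji. destruct (Hg02 j Hj) as [e' [He1 He2]].
    specialize (He2 Hji). lra. }
  set (r := Rmin (Rmin eps (dl / 2)) (g / 4)).
  assert (Hr1 : r <= eps). { unfold r. eapply Rle_trans; [apply Rmin_l| apply Rmin_l]. }
  assert (Hr2 : r <= dl / 2). { unfold r. eapply Rle_trans; [apply Rmin_l| apply Rmin_r]. }
  assert (Hr3 : r <= g / 4). { unfold r. apply Rmin_r. }
  assert (Hr0 : 0 < r). { unfold r. apply Rmin_pos; [apply Rmin_pos|]; lra. }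
  assert (He1 : eps <= rho st / 2) by apply Rmin_l.
  assert (He2 : eps <= / (INR n + 1)) by apply Rmin_r.
  exists (mkState x r m). unfold stepQ; cbn [cs rho qq].
  split; [auto|]. split; [lra|]. split; [lra|]. split.
  { intros i Hi. assert (Hy : y i = cs st (Nat.div2 i)).
    { unfold y. replace (i <? K - 2)%nat with true; auto. symmetry; apply Nat.ltb_lt; auto. }
    pose proof (Hxy i ltac:(unfold K in *; lia)). rewrite Hy in H. lra. }
  split.
  { assert (Hy : y (K - 2)%nat = tgt).
    { unfold y. replace (K - 2 <? K - 2)%nat with false; auto. symmetry; apply Nat.ltb_ge; auto. }
    pose proof (Hxy (K-2)%nat ltac:(lia)). rewrite Hy in H. fold K. lra. }
  intros i j Hi Hj Hij. split.
  { destruct (Hg2 i ltac:(unfold K in *; lia)) as [e' [Hge Hge2]].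
    specialize (Hge2 j ltac:(unfold K in *; lia) ltac:(auto)). lra. }
  intros z w Hz Hw.
  destruct (Hdl2 i ltac:(unfold K in *; lia)) as [e1 [He1' Hc1]].
  destruct (Hdl2 j ltac:(unfold K in *; lia)) as [e2 [He2' Hc2]].
  specialize (Hc1 z ltac:(lra)). specialize (Hc2 w ltac:(lra)).
  specialize (Hdist i j ltac:(unfold K in *; lia) ltac:(unfold K in *; lia) Hij).
  pose proof (m_tri d Hm (Nat.iter m f (x i)) (Nat.iter m f z) (Nat.iter m f (x j))).
  pose proof (m_tri d Hm (Nat.iter m f z) (Nat.iter m f w) (Nat.iter m f (x j))).
  rewrite (m_sym d Hm (Nat.iter m f w) (Nat.iter m f (x j))) in H0.
  lra.
Qed.

Definition bitn (b : bool) : nat := if b then 1%nat else 0%nat.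

Fixpoint P (a : nat) (b : nat -> bool) (n : nat) : nat :=
  match n with
  | O => O
  | S m => if Nat.eqb m a then (2 ^ S a - 2)%nat else (2 * P a b m + bitn (b m))%nat
  end.

Lemma P_root a b : P a b (S a) = (2 ^ S a - 2)%nat.
Proof. simpl P. rewrite Nat.eqb_refl. reflexivity. Qed.

Lemma P_succ a b n : (S a <= n)%nat -> P a b (S n) = (2 * P a b n + bitn (b n))%nat.
Proof. intros H. simpl P. replace (Nat.eqb n a) with false; auto. symmetry; apply Nat.eqb_neq; lia. Qed.

Lemma pow2_ge1 n : (1 <= 2 ^ n)%nat.
Proof. pose proof (Nat.pow_nonzero 2 n). lia. Qed.

Lemma bitn_le b : (bitn b <= 1)%nat.
Proof. destruct b; simpl; lia. Qed.

Lemma P_bound a b n : (S a <= n)%nat -> (P a b n < 2 ^ n - 1)%nat.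
Proof.
  intros H; induction H.
  - rewrite P_root. rewrite Nat.pow_succ_r'. pose proof (pow2_ge1 a). lia.
  - rewrite P_succ by lia. rewrite Nat.pow_succ_r'. pose proof (bitn_le (b m)). lia.
Qed.

Lemma div2_bit j b : Nat.div2 (2 * j + bitn b) = j.
Proof.
  destruct b; simpl bitn.
  - rewrite Nat.add_1_r. apply Nat.div2_succ_double.
  - rewrite Nat.add_0_r. apply Nat.div2_double.
Qed.

Lemma bit_inj x y b c : (2 * x + bitn b = 2 * y + bitn c)%nat -> x = y /\ b = c.
Proof. destruct b, c; simpl; intros; split; auto; lia. Qed.

Lemma P_digits a b b' n : (S a <= n)%nat ->
  (P a b n = P a b' n <-> forall k, (S a <= k)%nat -> (k < n)%nat -> b k = b' k).
Proof.
  intros H; induction H.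
  - split; [intros; lia| intros; rewrite !P_root; auto].
  - rewrite !P_succ by lia. split.
    + intros E. apply bit_inj in E. destruct E as [E1 E2].
      intros k Hk1 Hk2. destruct (Nat.eq_dec k m) as [->|].
      * destruct (b m), (b' m); simpl in E2; auto; discriminate.
      * apply IHle; auto; lia.
    + intros Hk. rewrite (proj2 IHle) by (intros; apply Hk; lia).
      rewrite (Hk m) by lia. reflexivity.
Qed.

Definition useq {X} (st : nat -> State X) a b n := cs (st n) (P a b n).
Definition Lpt {X} (d : X -> X -> R) (st : nat -> State X) a b : X :=
  epsilon (inhabits (cs (st 0%nat) 0%nat)) (fun l => converges_to d (useq st a b) l).

Lemma half_pow_small eps : 0 < eps -> exists N, forall n, (N <= n)%nat -> (1/2)^n < eps.
Proof.
  intros H. destruct (pow_lt_1_zero (1/2) ltac:(rewrite Rabs_right; lra) eps H) as [N HN].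
  exists N. intros n Hn. specialize (HN n Hn). rewrite Rabs_right in HN; auto.
  apply Rle_ge, pow_le; lra.
Qed.

Lemma third_pow_small eps : 0 < eps -> exists N, (1/3)^N < eps.
Proof.
  intros H. destruct (pow_lt_1_zero (1/3) ltac:(rewrite Rabs_right; lra) eps H) as [N HN].
  exists N. specialize (HN N (le_n _)). rewrite Rabs_right in HN; auto.
  apply Rle_ge, pow_le; lra.
Qed.


Definition GoodSeq {X} (d : X -> X -> R) (f : X -> X) (tgt : nat -> X) (st : nat -> State X) :=
  rho (st 0%nat) = 1 /\ forall n, stepQ d f (tgt n) n (st n) (st (S n)).

Lemma rho_pos {X} d f tgt (st : nat -> State X) : GoodSeq d f tgt st -> forall n, 0 < rho (st n).
Proof.
  intros [H0 HQ] n. destruct n. - rewrite H0; lra. - apply (HQ n).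
Qed.

Lemma rho_halve {X} d f tgt (st : nat -> State X) : GoodSeq d f tgt st -> forall n, rho (st n) <= (1/2)^n.
Proof.
  intros [H0 HQ] n. induction n.
  - rewrite H0; simpl; lra.
  - destruct (HQ n) as [_ [H _]]. simpl. lra.
Qed.

Lemma rho_anti {X} d f tgt (st : nat -> State X) : GoodSeq d f tgt st ->
  forall m n, (m <= n)%nat -> rho (st n) <= rho (st m).
Proof.
  intros HG m n H; induction H; [lra|].
  pose proof (rho_pos d f tgt st HG m0).
  destruct HG as [_ HQ]. destruct (HQ m0) as [H1 [H2 _]].
  lra.
Qed.

Lemma path_nest {X} d f tgt (st : nat -> State X) a b n : GoodSeq d f tgt st -> (S a <= n)%nat ->
  d (useq st a b (S n)) (useq st a b n) + rho (st (S n)) <= rho (st n).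
Proof.
  intros [_ HQ] Hn. destruct (HQ n) as [_ [_ [_ [Hnest _]]]].
  unfold useq. rewrite P_succ by auto.
  pose proof (P_bound a b n Hn). pose proof (bitn_le (b n)).
  specialize (Hnest (2 * P a b n + bitn (b n))%nat).
  rewrite div2_bit in Hnest. apply Hnest.
  rewrite Nat.pow_succ_r'. lia.
Qed.

Lemma path_dist {X} d f tgt (st : nat -> State X) a b n : is_metric d -> GoodSeq d f tgt st ->
  (S a <= n)%nat -> forall k,
  d (useq st a b (n + k)) (useq st a b n) <= rho (st n) - rho (st (n + k)%nat).
Proof.
  intros Hm HG Hn k. induction k.
  - rewrite Nat.add_0_r, (m_refl d Hm). lra.
  - rewrite Nat.add_succ_r.
    pose proof (path_nest d f tgt st a b (n + k) HG ltac:(lia)).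
    pose proof (m_tri d Hm (useq st a b (S (n + k))) (useq st a b (n + k)) (useq st a b n)).
    lra.
Qed.

Lemma path_dist2 {X} d f tgt (st : nat -> State X) a b n m : is_metric d -> GoodSeq d f tgt st ->
  (S a <= n)%nat -> (n <= m)%nat ->
  d (useq st a b m) (useq st a b n) <= rho (st n) - rho (st m).
Proof.
  intros Hm HG Hn Hnm. replace m with (n + (m - n))%nat by lia.
  apply (path_dist d f tgt); auto.
Qed.

Lemma rho_small {X} d f tgt (st : nat -> State X) : GoodSeq d f tgt st ->
  forall eps, 0 < eps -> forall N0, exists N, (N0 <= N)%nat /\ forall n, (N <= n)%nat -> rho (st n) < eps.
Proof.
  intros HG eps Heps N0. destruct (half_pow_small eps Heps) as [N HN].
  exists (Nat.max N N0). split; [lia|]. intros n Hn.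
  pose proof (rho_halve d f tgt st HG n). specialize (HN n ltac:(lia)). lra.
Qed.

Lemma useq_cauchy {X} d f tgt (st : nat -> State X) a b : is_metric d -> GoodSeq d f tgt st ->
  cauchy_seq d (useq st a b).
Proof.
  intros Hm HG eps Heps.
  destruct (rho_small d f tgt st HG (eps/2) ltac:(lra) (S a)) as [N [HN1 HN2]].
  exists N. intros m n Hm1 Hn1.
  pose proof (path_dist2 d f tgt st a b N m Hm HG HN1 Hm1).
  pose proof (path_dist2 d f tgt st a b N n Hm HG HN1 Hn1).
  pose proof (rho_pos d f tgt st HG m). pose proof (rho_pos d f tgt st HG n).
  specialize (HN2 N (le_n _)).
  pose proof (m_tri d Hm (useq st a b m) (useq st a b N) (useq st a b n)) as T.
  rewrite (m_sym d Hm (useq st a b N) (useq st a b n)) in T. lra.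
Qed.

Lemma L_close {X} d f tgt (st : nat -> State X) a b n : is_metric d -> GoodSeq d f tgt st ->
  complete_metric d -> (S a <= n)%nat ->
  d (Lpt d st a b) (cs (st n) (P a b n)) <= rho (st n).
Proof.
  intros Hm HG Hc Hn.
  assert (Hconv : converges_to d (useq st a b) (Lpt d st a b)).
  { unfold Lpt. apply epsilon_spec. apply Hc. apply (useq_cauchy d f tgt); auto. }
  destruct (Rle_or_lt (d (Lpt d st a b) (cs (st n) (P a b n))) (rho (st n))) as [H|H]; auto.
  exfalso. set (e := d (Lpt d st a b) (cs (st n) (P a b n)) - rho (st n)).
  destruct (Hconv e ltac:(unfold e; lra)) as [N HN].
  specialize (HN (Nat.max N n) ltac:(lia)).
  pose proof (path_dist2 d f tgt st a b n (Nat.max N n) Hm HG Hn ltac:(lia)).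
  pose proof (rho_pos d f tgt st HG (Nat.max N n)).
  pose proof (m_tri d Hm (Lpt d st a b) (useq st a b (Nat.max N n)) (useq st a b n)) as T.
  unfold useq in *. rewrite (m_sym d Hm (cs (st (Nat.max N n)) _)) in HN. unfold e in HN. lra.
Qed.

Lemma node_gap {X} d f tgt (st : nat -> State X) a b a' b' n : is_metric d -> GoodSeq d f tgt st ->
  complete_metric d -> (S a <= n)%nat -> (S a' <= n)%nat -> P a b n <> P a' b' n ->
  rho (st n) <= d (Lpt d st a b) (Lpt d st a' b').
Proof.
  intros Hm HG Hc Ha Ha' Hne.
  pose proof (L_close d f tgt st a b n Hm HG Hc Ha) as C1.
  pose proof (L_close d f tgt st a' b' n Hm HG Hc Ha') as C2.
  pose proof (P_bound a b n Ha) as B1. pose proof (P_bound a' b' n Ha') as B2.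
  destruct n as [|n']; [lia|].
  destruct HG as [H0 HQ]. destruct (HQ n') as [_ [_ [_ [_ [_ Hpair]]]]].
  destruct (Hpair _ _ B1 B2 Hne) as [Hs _].
  pose proof (m_tri d Hm (cs (st (S n')) (P a b (S n'))) (Lpt d st a b) (cs (st (S n')) (P a' b' (S n')))) as T1.
  pose proof (m_tri d Hm (Lpt d st a b) (Lpt d st a' b') (cs (st (S n')) (P a' b' (S n')))) as T2.
  rewrite (m_sym d Hm (cs (st (S n')) (P a b (S n'))) (Lpt d st a b)) in T1.
  lra.
Qed.

Lemma exists_nat_gt (M : R) : exists N : nat, M < INR N.
Proof. destruct (INR_unbounded M) as [N HN]. exists N; lra. Qed.

Lemma sep_main {X} d f tgt (st : nat -> State X) a b a' b' : is_metric d -> GoodSeq d f tgt st ->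
  complete_metric d -> Lpt d st a b <> Lpt d st a' b' ->
  forall M, exists N, forall n, (N <= n)%nat ->
    M < d (Nat.iter (qq (st n)) f (Lpt d st a b)) (Nat.iter (qq (st n)) f (Lpt d st a' b')).
Proof.
  intros Hm HG Hc Hne M.
  set (x := Lpt d st a b). set (y := Lpt d st a' b').
  assert (Hd : 0 < d x y) by (apply (m_neq_pos d Hm); auto).
  destruct (rho_small d f tgt st HG (d x y / 2) ltac:(lra) (S (Nat.max a a'))) as [n0 [Hn0 Hr]].
  assert (Hneq0 : P a b n0 <> P a' b' n0).
  { intro E. pose proof (L_close d f tgt st a b n0 Hm HG Hc ltac:(lia)) as C1.
    pose proof (L_close d f tgt st a' b' n0 Hm HG Hc ltac:(lia)) as C2.
    rewrite <- E in C2. specialize (Hr n0 (le_n _)).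
    pose proof (m_tri d Hm x (cs (st n0) (P a b n0)) y) as T.
    rewrite (m_sym d Hm (cs (st n0) (P a b n0)) y) in T. fold x y in C1, C2. lra. }
  assert (Hneq : forall n, (n0 <= n)%nat -> P a b n <> P a' b' n).
  { intros n Hn; induction Hn; auto.
    rewrite !P_succ by lia. intro E. apply bit_inj in E. tauto. }
  destruct (exists_nat_gt M) as [N1 HN1].
  exists (Nat.max n0 (S N1)). intros n Hn.
  destruct n as [|n']; [lia|].
  pose proof (L_close d f tgt st a b (S n') Hm HG Hc ltac:(lia)) as C1.
  pose proof (L_close d f tgt st a' b' (S n') Hm HG Hc ltac:(lia)) as C2.
  pose proof (P_bound a b (S n') ltac:(lia)) as B1. pose proof (P_bound a' b' (S n') ltac:(lia)) as B2.
  destruct HG as [H0 HQ]. destruct (HQ n') as [_ [_ [_ [_ [_ Hpair]]]]].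
  destruct (Hpair _ _ B1 B2 (Hneq (S n') ltac:(lia))) as [_ Hs].
  rewrite (m_sym d Hm) in C1. rewrite (m_sym d Hm) in C2.
  specialize (Hs _ _ C1 C2).
  assert (INR N1 <= INR n') by (apply le_INR; lia).
  unfold x, y. lra.
Qed.

Definition shift (t : R) : R := if Rle_dec t (1/2) then 3 * t else 3 * t - 2.
Definition digit (t : R) : bool := if Rle_dec t (1/2) then false else true.

Lemma stage_bounds n u : cantor_stage n u -> 0 <= u <= 1.
Proof.
  revert u; induction n; simpl; intros u H; auto.
  destruct H as [H|H]; apply IHn in H; lra.
Qed.

Lemma cantor_bounds t : cantor_ternary t -> 0 <= t <= 1.
Proof. intros H. apply (stage_bounds 0 t (H 0%nat)). Qed.

Lemma cantor_lh t : cantor_ternary t -> t <= 1/3 \/ 2/3 <= t.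
Proof. intros H. specialize (H 1%nat). simpl in H. lra. Qed.

Lemma cantor_shift t : cantor_ternary t -> cantor_ternary (shift t).
Proof.
  intros H n. pose proof (cantor_lh t H) as LH. specialize (H (S n)). simpl in H. unfold shift.
  destruct (Rle_dec t (1/2)).
  - destruct H as [H|H]; auto. apply stage_bounds in H. lra.
  - destruct H as [H|H]; auto. apply stage_bounds in H. lra.
Qed.

Lemma cantor_iter m t : cantor_ternary t -> cantor_ternary (Nat.iter m shift t).
Proof. induction m; simpl; auto. intros H; apply cantor_shift; auto. Qed.

Lemma digit_diff s t : cantor_ternary s -> cantor_ternary t -> digit s <> digit t -> 1/3 <= Rabs (s - t).
Proof.
  intros Hs Ht. pose proof (cantor_lh s Hs). pose proof (cantor_lh t Ht).
  unfold digit. destruct (Rle_dec s (1/2)), (Rle_dec t (1/2)); intros E; try (exfalso; apply E; reflexivity).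
  - rewrite Rabs_left by lra. lra.
  - rewrite Rabs_right by lra. lra.
Qed.

Lemma shift_same s t : digit s = digit t -> shift s - shift t = 3 * (s - t).
Proof.
  unfold digit, shift. destruct (Rle_dec s (1/2)), (Rle_dec t (1/2)); intros E; try discriminate; ring.
Qed.

Lemma agree_close m : forall s t, cantor_ternary s -> cantor_ternary t ->
  (forall k, (k < m)%nat -> digit (Nat.iter k shift s) = digit (Nat.iter k shift t)) ->
  Rabs (s - t) <= (1/3)^m.
Proof.
  induction m; intros s t Hs Ht H.
  - pose proof (cantor_bounds s Hs); pose proof (cantor_bounds t Ht). simpl.
    apply Rabs_le; lra.
  - assert (E0 : digit s = digit t) by (apply (H 0%nat); lia).
    assert (IH : Rabs (shift s - shift t) <= (1/3)^m).
    { apply IHm; try apply cantor_shift; auto.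
      intros k Hk. rewrite <- !Nat.iter_succ_r. apply H; lia. }
    rewrite shift_same in IH by auto. rewrite Rabs_mult, Rabs_right in IH by lra.
    simpl. lra.
Qed.

Lemma third_pow_le1 m : (1/3)^m <= 1.
Proof. induction m; simpl; [lra|]. pose proof (pow_le (1/3) m ltac:(lra)). lra. Qed.

Lemma close_agree m : forall s t, cantor_ternary s -> cantor_ternary t ->
  Rabs (s - t) < (1/3)^m ->
  forall k, (k < m)%nat -> digit (Nat.iter k shift s) = digit (Nat.iter k shift t).
Proof.
  induction m; intros s t Hs Ht H k Hk; [lia|].
  pose proof (third_pow_le1 m). simpl in H.
  assert (E0 : digit s = digit t).
  { destruct (Bool.bool_dec (digit s) (digit t)) as [E|E]; auto.
    pose proof (digit_diff s t Hs Ht E). lra. }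
  destruct k as [|k]; [simpl; auto|].
  rewrite !Nat.iter_succ_r. apply IHm; try apply cantor_shift; auto; [|lia].
  rewrite shift_same by auto. rewrite Rabs_mult, Rabs_right by lra. lra.
Qed.

Definition digs (a : nat) (t : R) (n : nat) : bool := digit (Nat.iter (n - S a) shift t).
Definition hmap {X} (d : X -> X -> R) (st : nat -> State X) a t := Lpt d st a (digs a t).
Definition Aset {X} (d : X -> X -> R) (st : nat -> State X) a (x : X) :=
  exists t, cantor_ternary t /\ hmap d st a t = x.

Lemma digs_fwd a m s t :
  (forall k, (k < m)%nat -> digit (Nat.iter k shift s) = digit (Nat.iter k shift t)) ->
  forall k, (S a <= k)%nat -> (k < S a + m)%nat -> digs a s k = digs a t k.
Proof. intros H k H1 H2. unfold digs. apply H. lia. Qed.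

Lemma digs_bwd a m s t :
  (forall k, (S a <= k)%nat -> (k < S a + m)%nat -> digs a s k = digs a t k) ->
  forall k, (k < m)%nat -> digit (Nat.iter k shift s) = digit (Nat.iter k shift t).
Proof.
  intros H k Hk. specialize (H (S a + k)%nat ltac:(lia) ltac:(lia)). unfold digs in H.
  replace (S a + k - S a)%nat with k in H by lia. auto.
Qed.

Lemma hmap_Peq {X} d f tgt (st : nat -> State X) a s t m : is_metric d -> GoodSeq d f tgt st ->
  complete_metric d -> d (hmap d st a s) (hmap d st a t) < rho (st (S a + m)%nat) ->
  P a (digs a s) (S a + m) = P a (digs a t) (S a + m).
Proof.
  intros Hm HG Hc H. destruct (Nat.eq_dec (P a (digs a s) (S a + m)) (P a (digs a t) (S a + m))); auto.
  exfalso. pose proof (node_gap d f tgt st a (digs a s) a (digs a t) (S a + m) Hm HG Hc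
     ltac:(lia) ltac:(lia) n). unfold hmap in H. lra.
Qed.

Lemma homeo {X} d f tgt (st : nat -> State X) a : is_metric d -> GoodSeq d f tgt st ->
  complete_metric d -> homeomorphic_to_cantor d (Aset d st a).
Proof.
  intros Hm HG Hc. exists (hmap d st a). split; [|split; [|split; [|split]]].
  - intros t Ht. exists t; auto.
  - intros x [t [Ht E]]. exists t; auto.
  - intros s t Hs Ht E.
    destruct (Req_dec s t) as [|Hne]; auto. exfalso.
    assert (Hpos : 0 < Rabs (s - t)) by (apply Rabs_pos_lt; lra).
    destruct (third_pow_small _ Hpos) as [m Hmm].
    assert (HP : P a (digs a s) (S a + m) = P a (digs a t) (S a + m)).
    { apply (hmap_Peq d f tgt st); auto. rewrite E, (m_refl d Hm). apply (rho_pos d f tgt st HG). }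
    pose proof (proj1 (P_digits a _ _ (S a + m) ltac:(lia)) HP) as HP2.
    pose proof (agree_close m s t Hs Ht (digs_bwd a m s t HP2)). lra.
  - intros s eps Hs Heps.
    destruct (rho_small d f tgt st HG (eps/2) ltac:(lra) (S a)) as [n [Hn Hr]].
    specialize (Hr n (le_n _)).
    exists ((1/3)^(n - S a)). split; [apply pow_lt; lra|].
    intros t Ht Hst.
    pose proof (close_agree _ s t Hs Ht Hst) as Ag.
    pose proof (digs_fwd a _ s t Ag) as Ag2.
    replace (S a + (n - S a))%nat with n in Ag2 by lia.
    assert (HP : P a (digs a s) n = P a (digs a t) n) by (apply (P_digits a _ _ n Hn); auto).
    pose proof (L_close d f tgt st a (digs a s) n Hm HG Hc Hn) as C1.
    pose proof (L_close d f tgt st a (digs a t) n Hm HG Hc Hn) as C2.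
    rewrite <- HP in C2. unfold hmap.
    pose proof (m_tri d Hm (Lpt d st a (digs a s)) (cs (st n) (P a (digs a s) n)) (Lpt d st a (digs a t))) as T.
    rewrite (m_sym d Hm (cs (st n) (P a (digs a s) n)) (Lpt d st a (digs a t))) in T. lra.
  - intros s eps Hs Heps.
    destruct (third_pow_small _ Heps) as [m Hmm].
    exists (rho (st (S a + m)%nat)). split; [apply (rho_pos d f tgt st HG)|].
    intros t Ht Hd.
    pose proof (hmap_Peq d f tgt st a s t m Hm HG Hc Hd) as HP.
    pose proof (proj1 (P_digits a _ _ (S a + m) ltac:(lia)) HP) as HP2.
    pose proof (agree_close m s t Hs Ht (digs_bwd a m s t HP2)). lra.
Qed.

Lemma cantor_zero : cantor_ternary 0.
Proof. intros k; induction k; simpl; [lra|]. left. replace (3 * 0) with 0 by ring. auto. Qed.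

Lemma S_dense {X} d f tgt (st : nat -> State X) : is_metric d -> GoodSeq d f tgt st ->
  complete_metric d ->
  (forall x eps, 0 < eps -> forall N, exists n, (N <= n)%nat /\ d x (tgt n) < eps) ->
  dense_set d (fun x => exists a, Aset d st a x).
Proof.
  intros Hm HG Hc Htgt x eps Heps.
  destruct (exists_nat_gt (3 / eps)) as [N1 HN1].
  destruct (Htgt x (eps/3) ltac:(lra) N1) as [n [Hn Hx]].
  exists (hmap d st n 0). split.
  { exists n, 0. split; auto. apply cantor_zero. }
  pose proof (L_close d f tgt st n (digs n 0) (S n) Hm HG Hc (le_n _)) as C.
  rewrite P_root in C.
  destruct HG as [H0 HQ]. destruct (HQ n) as [_ [_ [Hr [_ [Hroot _]]]]].
  assert (INR N1 <= INR n) by (apply le_INR; auto).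
  assert (Hlt : 3 / eps < INR n + 1) by lra.
  assert (Hinv : / (INR n + 1) < eps / 3).
  { assert (0 < 3 / eps) by (apply Rdiv_lt_0_compat; lra).
    replace (eps / 3) with (/ (3 / eps)) by (field; lra).
    apply Rinv_lt_contravar; auto. apply Rmult_lt_0_compat; lra. }
  unfold hmap.
  pose proof (m_tri d Hm x (tgt n) (Lpt d st n (digs n 0))) as T1.
  pose proof (m_tri d Hm (Lpt d st n (digs n 0)) (cs (st (S n)) (2 ^ S n - 2)%nat) (tgt n)) as T2.
  rewrite (m_sym d Hm (tgt n) (Lpt d st n (digs n 0))) in T1.
  lra.
Qed.

Fixpoint stateSeq {X} (st0 : State X) (next : nat -> State X -> State X) (n : nat) : State X :=
  match n with O => st0 | S m => next m (stateSeq st0 next m) end.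

Theorem corollary2p5 (X : Type) (d : X -> X -> R) (f : X -> X) :
  is_metric d -> complete_metric d -> separable d -> no_isolated_points d ->
  continuous_map d f ->
  ((forall k : nat, (2 <= k)%nat -> dense_in_power d k (D_k d f k))
   <->
   (exists (q : nat -> nat) (S : X -> Prop),
      sigma_cantor d S /\ dense_set d S /\
      forall x y, S x -> S y -> x <> y ->
        forall M, exists N, forall n, (N <= n)%nat ->
          M < d (Nat.iter (q n) f x) (Nat.iter (q n) f y))).
Proof.
  intros Hm Hc Hsp Hni Hf. split; [intro H1 | apply dir21; auto].
  destruct (classic (inhabited X)) as [[x0]|Hne].
  2:{ exists (fun _ => 0%nat), (fun _ => False). split; [|split].
      - exists Empty_set, (fun (e : Empty_set) (_ : X) => False). split; [|split].
        + exists (fun e : Empty_set => match e with end). intros i; destruct i.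
        + intros i; destruct i.
        + intros x; split; [tauto| intros [i _]; destruct i].
      - intros x; exfalso; apply Hne; exact (inhabits x).
      - intros x; tauto. }
  destruct Hsp as [D [[g Hg] HD]].
  set (e := fun k => epsilon (inhabits x0) (fun y => D y /\ g y = k)).
  set (tgt := fun n => e (n - Nat.sqrt n * Nat.sqrt n)%nat).
  assert (Htgt : forall x eps, 0 < eps -> forall N, exists n, (N <= n)%nat /\ d x (tgt n) < eps).
  { intros x eps Heps N. destruct (HD x eps Heps) as [y [Dy Hy]].
    set (k := g y).
    assert (Ek : e k = y).
    { assert (Hs : D (e k) /\ g (e k) = k).
      { unfold e. apply (epsilon_spec (inhabits x0) (fun y => D y /\ g y = k)). exists y; auto. }
      apply Hg; tauto. }
    set (m := (N + k)%nat). exists (m * m + k)%nat. split; [nia|].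
    assert (Hsq : Nat.sqrt (m * m + k) = m) by (apply Nat.sqrt_unique; unfold m; nia).
    unfold tgt. rewrite Hsq. replace (m * m + k - m * m)%nat with k by lia. rewrite Ek; auto. }
  set (st0 := mkState (fun _ : nat => x0) 1 0%nat).
  set (next := fun n st => epsilon (inhabits st0) (fun st' => 0 < rho st -> stepQ d f (tgt n) n st st')).
  set (st := stateSeq st0 next).
  assert (Hstep : forall n, 0 < rho (st n) -> stepQ d f (tgt n) n (st n) (st (S n))).
  { intros n Hp. change (st (S n)) with (next n (st n)). unfold next.
    apply (epsilon_spec (inhabits st0) (fun st' => 0 < rho (st n) -> stepQ d f (tgt n) n (st n) st')); auto.
    destruct (step_exists d f Hm Hf H1 (tgt n) n (st n) Hp) as [s' Hs']. exists s'; auto. }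
  assert (Hpos : forall n, 0 < rho (st n)).
  { induction n. - simpl. lra. - apply (Hstep n IHn). }
  assert (HG : GoodSeq d f tgt st).
  { split; [reflexivity| intros n; apply Hstep; auto]. }
  exists (fun n => qq (st n)), (fun x => exists a, Aset d st a x).
  split; [|split].
  - exists nat, (Aset d st). split; [|split].
    + exists (fun i => i); auto.
    + intros a; apply (homeo d f tgt st a Hm HG Hc).
    + intros x; tauto.
  - apply (S_dense d f tgt st Hm HG Hc Htgt).
  - intros x y [a [s [Hs Ex]]] [a' [t [Ht Ey]]] Hne M. subst x y. unfold hmap in *.
    apply (sep_main d f tgt st); auto.
Qed.
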